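(* Let $n$ be a positive integer and let $F=O\times\{0,n\}\subset\mathbb{Z}^3$ be the filler, where $O=\{-1,0,1\}^2\setminus\{(0,0)\}$. If $E\subset\mathbb{Z}^3$ contains some translate of $\{-1,0,1\}^2\times\{0\}$ as a subset, then $F$ does not tile $E$, i.e. there is no $W\subset\mathbb{Z}^3$ with $W\oplus F$ non-overlapping and $W\oplus F=E$.
   Context: $A\oplus B=\{a+b: a\in A, b\in B\}$; it is non-overlapping if each element arises from a unique pair $(a,b)$. *)

(* Defs.v *)
From Stdlib Require Import ZArith.
Open Scope Z_scope.

Definition pt := (Z * Z * Z)%type.

Definition padd (a b : pt) : pt :=
  match a, b with (a1, a2, a3), (b1, b2, b3) => (a1 + b1, a2 + b2, a3 + b3) end.

Definition inO (x y : Z) : Prop :=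
  -1 <= x <= 1 /\ -1 <= y <= 1 /\ ~ (x = 0 /\ y = 0).

Definition filler (n : Z) (p : pt) : Prop :=
  match p with (x, y, z) => inO x y /\ (z = 0 \/ z = n) end.

Definition square (p : pt) : Prop :=
  match p with (x, y, z) => -1 <= x <= 1 /\ -1 <= y <= 1 /\ z = 0 end.

Definition sumset (A B : pt -> Prop) (p : pt) : Prop :=
  exists a b, A a /\ B b /\ p = padd a b.

Definition non_overlapping (A B : pt -> Prop) : Prop :=
  forall a a' b b', A a -> A a' -> B b -> B b' ->
    padd a b = padd a' b' -> a = a' /\ b = b'.

Definition contains_translate (E S : pt -> Prop) : Prop :=
  exists t, forall s, S s -> E (padd t s).

(* Main.v *)
Require Import Defs.
From Stdlib Require Import ZArith Lia.
Open Scope Z_scope.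

Lemma common_nb (a b : Z) : inO a b ->
  exists u1 u2, inO u1 u2 /\ inO (u1 + a) (u2 + b).
Proof.
  unfold inO; intros H.
  destruct (Z.eq_dec a 0).
  - exists 1, (-b). lia.
  - destruct (Z.eq_dec b 0).
    + exists (-a), 1. lia.
    + exists (-a), 0. lia.
Qed.

Theorem lemma4p2 (n : Z) (E : pt -> Prop) :
  0 < n ->
  contains_translate E square ->
  ~ (exists W : pt -> Prop,
       non_overlapping W (filler n) /\
       (forall p, sumset W (filler n) p <-> E p)).
Proof.
  intros _ [[[t1 t2] t3] Ht] [W [HN HE]].
  assert (E0 : E (t1, t2, t3)).
  { specialize (Ht (0,0,0)). simpl in Ht. rewrite !Z.add_0_r in Ht. apply Ht. lia. }
  apply HE in E0. destruct E0 as [[[w1 w2] w3] [[[a b] c] [Hw [Hf Heq]]]].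
  simpl in Heq. injection Heq as e1 e2 e3. simpl in Hf. destruct Hf as [HO Hc].
  assert (Eq : E (w1, w2, t3)).
  { specialize (Ht (-a, -b, 0)). simpl in Ht.
    replace (t1 + - a) with w1 in Ht by lia. replace (t2 + - b) with w2 in Ht by lia.
    rewrite Z.add_0_r in Ht. apply Ht. unfold inO in HO. lia. }
  apply HE in Eq. destruct Eq as [[[v1 v2] v3] [[[a' b'] c'] [Hv [Hf' Heq']]]].
  simpl in Heq'. injection Heq' as f1 f2 f3. simpl in Hf'. destruct Hf' as [HO' Hc'].
  destruct (common_nb a' b' HO') as [u1 [u2 [Hu1 Hu2]]].
  assert (HH := HN (w1, w2, w3) (v1, v2, v3) (u1, u2, c) (u1 + a', u2 + b', c')
                 Hw Hv).
  destruct HH as [HH _].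
  - simpl. auto.
  - simpl. auto.
  - simpl. f_equal; [f_equal|]; lia.
  - injection HH as g1 g2 g3. unfold inO in HO'. lia.
Qed.
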